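(* Let $p$ be a prime with $p\equiv5\pmod6$. Then $D^{p-1}(\mathbf{u})=H^2(\mathbf{u})$ for every $\mathbf{u}\in\mathbb{Z}_p^3$, i.e. $D^{p-1}(x_1,x_2,x_3)=(x_3,x_1,x_2)$.
   Context: The Ducci function $D:\mathbb{Z}_p^3\to\mathbb{Z}_p^3$ is $D(x_1,x_2,x_3)=(x_1+x_2,\,x_2+x_3,\,x_3+x_1)$, entries mod $p$. $H(x_1,x_2,x_3)=(x_2,x_3,x_1)$. *)

(* Defs.v *)
From mathcomp Require Import all_boot all_algebra.
Set Implicit Arguments. Unset Strict Implicit. Unset Printing Implicit Defensive.
Import GRing.Theory.
Local Open Scope ring_scope.

Definition ducci (p : nat) (u : 'F_p * 'F_p * 'F_p) : 'F_p * 'F_p * 'F_p :=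
  let: (x1, x2, x3) := u in (x1 + x2, x2 + x3, x3 + x1).

Definition Hshift (p : nat) (u : 'F_p * 'F_p * 'F_p) : 'F_p * 'F_p * 'F_p :=
  let: (x1, x2, x3) := u in (x2, x3, x1).

(* Main.v *)
Require Import Defs.
From mathcomp Require Import all_boot all_algebra.
Set Implicit Arguments. Unset Strict Implicit. Unset Printing Implicit Defensive.
Import GRing.Theory.
Local Open Scope ring_scope.

Section S.
Variable p : nat.
Local Notation T := ('F_p * 'F_p * 'F_p)%type.

Definition t2r (u : T) : 'rV['F_p]_3 :=
  let: (a, b, c) := u in \row_(j < 3) [:: a; b; c]`_j.
Definition r2t (r : 'rV['F_p]_3) : T := (r 0 0, r 0 1, r 0 2).

Definition Q : 'M['F_p]_3 := \matrix_(i < 3, j < 3) ((i : nat) == (j.+1 %% 3)%N)%:R.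

Lemma r2tK u : r2t (t2r u) = u.
Proof. by case: u => [[a b] c]; rewrite /r2t /= !mxE. Qed.

Lemma s3 (F : 'I_3 -> 'F_p) : \sum_i F i = F 0 + F 1 + F 2.
Proof. rewrite !big_ord_recr /= big_ord0 add0r; congr (F _ + F _ + F _); exact/val_inj. Qed.

Lemma ducciE r : ducci (r2t r) = r2t (r *m (1 + Q)).
Proof.
rewrite /r2t /ducci !mxE !s3 !mxE /=.
by rewrite ?addr0 ?add0r ?mulr1 ?mulr0 ?addr0 ?add0r // [r 0 2 + _]addrC.
Qed.

Lemma HE r : Hshift (r2t r) = r2t (r *m Q).
Proof.
rewrite /r2t /Hshift !mxE !s3 !mxE /=.
by congr (_, _, _); rewrite ?mulr1 ?mulr0 ?add0r ?addr0.
Qed.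

Lemma iterE n r : iter n (@ducci p) (r2t r) = r2t (r *m (1 + Q) ^+ n).
Proof.
elim: n => [|n IH]; first by rewrite expr0 mulmx1.
by rewrite iterS IH ducciE exprSr -mulmxA.
Qed.


Lemma Q3 : Q ^+ 3 = 1.
Proof.
rewrite !exprS expr0 mulr1.
apply/matrixP => i j.
rewrite -[Q * (Q * Q)]/(Q *m (Q *m Q)).
case: i => [[|[|[|i]]] Hi] //; case: j => [[|[|[|j]]] Hj] //;
  rewrite !mxE !s3 !mxE !s3 !mxE /= ?mulr1 ?mulr0 ?addr0 ?add0r ?mulr1 ?mulr0 ?addr0 ?add0r //.
Qed.

End S.

Lemma frob (p : nat) (hp : prime p) (X : 'M['F_p]_3) : (X + 1) ^+ p = X ^+ p + 1.
Proof.
case: p hp X => // n hp X.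
rewrite exprD1n big_ord_recr /= big_ord_recl /= bin0 binn expr0.
rewrite big1 ?addr0 ?[1 + _]addrC //.
move=> i _; rewrite /bump /=.
have lt : (0 < (i : nat).+1 < n.+1)%N.
  by apply/andP; split => //; have := ltn_ord i.
case/dvdnP: (prime_dvd_bin hp lt) => k ->.
by apply/matrixP => a b; rewrite mulrnA mulmxnE -mulr_natr (pchar_Fp_0 hp) mulr0 mxE.
Qed.


Theorem lemma4p3 (p : nat) (hp : prime p) (h5 : p = 5 %[mod 6])
  (u : 'F_p * 'F_p * 'F_p) :
  iter p.-1 (@ducci p) u = Hshift (Hshift u).
Proof.
have hpd : p = (6 * (p %/ 6) + 5)%N by rewrite {1}(divn_eq p 6) h5 mulnC.
set Qp := Q p.
have e : p = (3 * (2 * (p %/ 6) + 1) + 2)%N.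
  by rewrite {1}hpd mulnDr mulnA -addnA.
have Qpp : Qp ^+ p = Qp ^+ 2.
  have Qm m : Qp ^+ (3 * m + 2) = Qp ^+ 2 by rewrite exprD exprM Q3 expr1n mul1r.
  by have := Qm (2 * (p %/ 6) + 1)%N; rewrite -e.
set A := 1 + Qp.
have Q3' : Qp * Qp ^+ 2 = 1 by rewrite -exprS Q3.
have AN : A * (1 - Qp + Qp ^+ 2) = 1 *+ 2.
  rewrite /A mulrDl mul1r !mulrDr mulrN mulr1 Q3' -expr2.
  by rewrite addrACA !addrA !subrK.
have XA : A ^+ p.-1 * A = Qp ^+ 2 * A.
  rewrite -exprSr prednK ?prime_gt0 // /A addrC frob // Qpp mulrDr mulr1.
  by rewrite -exprSr Q3 addrC.
have X2 : A ^+ p.-1 *+ 2 = Qp ^+ 2 *+ 2.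
  by rewrite -[A ^+ _]mulr1 -[Qp ^+ 2]mulr1 -!mulrnAr -AN !mulrA XA.
have two : (2%:R : 'F_p) != 0.
  rewrite -(dvdn_pcharf (pchar_Fp hp)); apply/negP => /(dvdn_leq (isT : (0 < 2)%N)) h2.
  have h5' : (5 <= p)%N by rewrite [X in (_ <= X)%N]hpd leq_addl.
  by have := leq_trans h5' h2.
have XY : A ^+ p.-1 = Qp ^+ 2.
  apply/matrixP => i j; have : (A ^+ p.-1 *+ 2) i j = (Qp ^+ 2 *+ 2) i j by rewrite X2.
  rewrite !mulmxnE -[X in X = _]mulr_natr -[X in _ = X]mulr_natr => /eqP; rewrite -subr_eq0 -mulrBl mulf_eq0 (negbTE two) orbF subr_eq0.
  by move/eqP.
by rewrite -[u]r2tK iterE XY HE HE expr2 mulmxA.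
Qed.
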